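(* Let $\varphi$ be a CNF formula with $m$ clauses. During the execution of Algorithm msu1 on $\varphi$, the total number of blocking variables created is $\mathcal{O}(m^2)$ in the worst case.
   Context: Algorithm msu1 (Fu and Malik). Input: a CNF formula $\varphi$ (a finite set of clauses). All clauses of $\varphi$ are tagged non-auxiliary. The working formula is initialised to $\varphi_W:=\varphi$. Each iteration calls a SAT oracle on $\varphi_W$. If $\varphi_W$ is unsatisfiable, the oracle returns an unsatisfiable core $\varphi_C\subseteq\varphi_W$, i.e. a subset of the clauses of $\varphi_W$ that is itself unsatisfiable. Then, for each non-auxiliary clause $\omega\in\varphi_C$, a fresh variable $b$ (a blocking variable) is created and $\omega$ is replaced in $\varphi_W$ by $\omega\vee b$. The new clause is tagged non-auxiliary, and $b$ is associated with the original clause of $\varphi$ from which $\omega$ descends. Let $BV$ be the set of blocking variables created in this iteration. A CNF encoding of $\sum_{b\in BV} b=1$ is added to $\varphi_W$; its clauses are tagged auxiliary. An assignment to $BV$ extends to a satisfying assignment of the encoding iff exactly one variable of $BV$ is true. If $\varphi_W$ is satisfiable, the algorithm stops and returns $|\varphi|-\nu$, where $\nu$ is the number of blocking variables assigned value 1. *)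

(* Defs.v *)
(* Model of Algorithm msu1 (Fu & Malik) as a nondeterministic
   transition system: the SAT oracle's choice of core and the choice of the
   CNF encoding of the exactly-one constraint are arbitrary (subject to the
   specification in the paper). *)
From mathcomp Require Import all_boot.
Set Implicit Arguments. Unset Strict Implicit. Unset Printing Implicit Defensive.

(* Variables are natural numbers; a literal (v, b) is v if b = true, ~v otherwise. *)
Definition lit := (nat * bool)%type.
Definition clause := seq lit.
Definition cnf := seq clause.
Definition assignment := nat -> bool.

Definition lit_sat (s : assignment) (l : lit) : bool := s l.1 == l.2.
Definition clause_sat (s : assignment) (c : clause) : bool := has (lit_sat s) c.
Definition cnf_sat (s : assignment) (f : cnf) : bool := all (clause_sat s) f.
Definition satisfiable (f : cnf) : Prop := exists s, cnf_sat s f.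

Record tclause := TClause { tc_clause : clause; tc_aux : bool }.
Definition tc_dflt : tclause := TClause [::] true.

Definition occurs (v : nat) (W : seq tclause) : bool :=
  has (fun tc => v \in map fst (tc_clause tc)) W.

Definition msu1_init (phi : cnf) : seq tclause :=
  map (fun c => TClause c false) phi.

Definition relaxed (W : seq tclause) (I : pred nat) : seq nat :=
  [seq i <- iota 0 (size W) | I i && ~~ tc_aux (nth tc_dflt W i)].

Definition msu1_update (W : seq tclause) (I : pred nat) (bv : nat -> nat)
    (E : cnf) : seq tclause :=
  [seq (if I i && ~~ tc_aux (nth tc_dflt W i)
        then TClause (tc_clause (nth tc_dflt W i) ++ [:: (bv i, true)]) false
        else nth tc_dflt W i) | i <- iota 0 (size W)]
  ++ map (fun c => TClause c true) E.

(* One (unsatisfiable) iteration of msu1.  The state is (working formula,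
   number of blocking variables created so far). *)
Definition msu1_step (W : seq tclause) (n : nat) (W' : seq tclause) (n' : nat)
    : Prop :=
  exists (I : pred nat) (bv : nat -> nat) (E : cnf),
    let R := relaxed W I in
    let BV := map bv R in
    ~ satisfiable [seq tc_clause (nth tc_dflt W i) | i <- iota 0 (size W) & I i]
    /\ uniq BV
    /\ (forall b, b \in BV -> ~~ occurs b W)
    /\ (forall c, c \in E -> forall l, l \in c -> l.1 \in BV \/ ~~ occurs l.1 W)
    (* E encodes sum_{b in BV} b = 1 *)
    /\ (forall s : assignment,
          (exists s' : assignment,
              (forall b, b \in BV -> s' b = s b) /\ cnf_sat s' E)
          <-> count s BV = 1)
    /\ W' = msu1_update W I bv E
    /\ n' = n + size R.

Inductive msu1_reachable (phi : cnf) : seq tclause -> nat -> Prop :=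
| msu1_start : msu1_reachable phi (msu1_init phi) 0
| msu1_next W n W' n' :
    msu1_reachable phi W n -> msu1_step W n W' n' -> msu1_reachable phi W' n'.

(* Main.v *)
Require Import Defs.
From mathcomp Require Import all_boot.

Definition auxok (s : assignment) (W : seq tclause) :=
  all (fun tc => tc_aux tc ==> clause_sat s (tc_clause tc)) W.
Definition fals (s : assignment) (tc : tclause) :=
  ~~ tc_aux tc && ~~ clause_sat s (tc_clause tc).

Lemma count_le_in (T : eqType) (p1 p2 : pred T) (s : seq T) :
  (forall y, y \in s -> p1 y -> p2 y) -> count p1 s <= count p2 s.
Proof.
elim: s => //= a s IH H.
have h1 : p1 a <= p2 a.
  case E: (p1 a) => //. by rewrite (H a (mem_head _ _) E).
rewrite (leq_add h1) // IH // => y ys; apply: H; by rewrite inE ys orbT.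
Qed.

Lemma count_lt_in (T : eqType) (p1 p2 : pred T) (s : seq T) x :
  (forall y, y \in s -> p1 y -> p2 y) -> x \in s -> p2 x -> ~~ p1 x ->
  count p1 s < count p2 s.
Proof.
elim: s => //= a s IH H; rewrite inE => /orP[/eqP<- | xs] p2x np1x.
  rewrite p2x (negbTE np1x) add0n add1n ltnS.
  apply: count_le_in => y ys; apply: H; by rewrite inE ys orbT.
have h1 : p1 a <= p2 a.
  case E: (p1 a) => //. by rewrite (H a (mem_head _ _) E).
have h2 : count p1 s < count p2 s.
  apply: IH => // y ys; apply: H; by rewrite inE ys orbT.
by rewrite -addnS leq_add.
Qed.

Lemma occurs_in v (W : seq tclause) i (l : lit) : i < size W ->
  l \in tc_clause (nth tc_dflt W i) -> l.1 = v -> occurs v W.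
Proof.
move=> iW lc <-; apply/(has_nthP tc_dflt); exists i => //; exact: map_f.
Qed.

Lemma sat_agree (s1 s2 : assignment) (c : clause) :
  (forall l, l \in c -> s1 l.1 = s2 l.1) -> clause_sat s1 c = clause_sat s2 c.
Proof.
move=> H; apply: eq_in_has => l lc; by rewrite /lit_sat H.
Qed.

Lemma step_inv m W n W' n' :
  msu1_step W n W' n' ->
  count (fun tc => ~~ tc_aux tc) W = m ->
  (exists s, auxok s W /\ n + m * count (fals s) W <= m * m) ->
  count (fun tc => ~~ tc_aux tc) W' = m /\
  (exists s, auxok s W' /\ n' + m * count (fals s) W' <= m * m).
Proof.
move=> [I [bv [E [Hcore [Huniq [Hfresh [HE [Henc [-> ->]]]]]]]]] Hsoft [s [Hs Hn]].
set R := relaxed W I.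
set BV := map bv R.
set g := fun i => if I i && ~~ tc_aux (nth tc_dflt W i)
        then TClause (tc_clause (nth tc_dflt W i) ++ [:: (bv i, true)]) false
        else nth tc_dflt W i.
have Wdef : W = map (nth tc_dflt W) (iota 0 (size W)) by rewrite -[LHS](mkseq_nth tc_dflt).
have nthW : forall i, i \in iota 0 (size W) -> i < size W.
  by move=> i; rewrite mem_iota => /andP[_ ?].
have [i0 i0in i0f] : exists2 i0, i0 \in [seq i <- iota 0 (size W) | I i] &
     ~~ clause_sat s (tc_clause (nth tc_dflt W i0)).
  have : ~~ cnf_sat s [seq tc_clause (nth tc_dflt W i) | i <- iota 0 (size W) & I i].
    by apply/negP => H; apply: Hcore; exists s.
  rewrite /cnf_sat all_map => /allPn [i ii hi]; by exists i.
move: i0in; rewrite mem_filter => /andP[Ii0 i0it].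
have i0soft : ~~ tc_aux (nth tc_dflt W i0).
  apply/negP => a; move/(all_nthP tc_dflt): Hs => /(_ _ (nthW _ i0it)); rewrite a /=.
  by move=> h; rewrite h in i0f.
have i0R : i0 \in R by rewrite /R /relaxed mem_filter Ii0 i0soft i0it.
have bvBV : bv i0 \in BV by apply: map_f.
have [s' [s'BV s'E]] : exists s' : assignment,
    (forall b, b \in BV -> s' b = (b == bv i0)) /\ cnf_sat s' E.
  apply/(Henc (fun b => b == bv i0)).
  by rewrite (count_uniq_mem _ Huniq) bvBV.
set s2 : assignment := fun x => if occurs x W then s x else s' x.
have s2W : forall i, i < size W -> forall l, l \in tc_clause (nth tc_dflt W i) -> s2 l.1 = s l.1.
  by move=> i iW l lc; rewrite /s2 (occurs_in _ _ _ _ iW lc erefl).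
have satW : forall i, i < size W -> clause_sat s2 (tc_clause (nth tc_dflt W i)) = clause_sat s (tc_clause (nth tc_dflt W i)).
  by move=> i iW; apply: sat_agree; apply: s2W.
have s2bv : s2 (bv i0) = true.
  by rewrite /s2 (negbTE (Hfresh _ bvBV)) s'BV // eqxx.
have sizeR : size R <= m.
  rewrite /R /relaxed size_filter; apply: (@leq_trans (count (fun i => ~~ tc_aux (nth tc_dflt W i)) (iota 0 (size W)))).
    by apply: sub_count => i /andP[].
  have cW : count (fun tc => ~~ tc_aux tc) W = count (fun i => ~~ tc_aux (nth tc_dflt W i)) (iota 0 (size W)).
    by rewrite {1}Wdef count_map.
  by rewrite -Hsoft cW.
have softg : forall i, ~~ tc_aux (g i) = ~~ tc_aux (nth tc_dflt W i).
  by move=> i; rewrite /g; case: ifP => [/andP[_ ->]|].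
have fals_le : forall i, i \in iota 0 (size W) -> fals s2 (g i) -> fals s (nth tc_dflt W i).
  move=> i ii; rewrite /fals /g; case: ifP => [/andP[_ ->] | _] /=.
    by rewrite /clause_sat has_cat negb_or => /andP[]; rewrite -/(clause_sat _ _) satW ?nthW.
  by rewrite satW ?nthW.
have fals_lt : count (fals s2) (map g (iota 0 (size W))) < count (fals s) W.
  have cF : count (fals s) W = count (fun i => fals s (nth tc_dflt W i)) (iota 0 (size W)).
    by rewrite {1}Wdef count_map.
  rewrite count_map cF.
  apply: (@count_lt_in _ _ _ _ i0) => //; try (by move=> y; apply: fals_le);
    try (by rewrite /= /fals i0soft i0f).
  rewrite /= /fals /g Ii0 i0soft /= /clause_sat has_cat /= /lit_sat /= s2bv.
  by rewrite orbT.
split.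
  have cW : count (fun tc => ~~ tc_aux tc) W = count (fun i => ~~ tc_aux (nth tc_dflt W i)) (iota 0 (size W)).
    by rewrite {1}Wdef count_map.
  rewrite count_cat !count_map -Hsoft cW.
  have -> : count (preim (fun c => TClause c true) (fun tc => ~~ tc_aux tc)) E = 0.
    by apply/eqP; rewrite -leqn0; rewrite (eq_count (a2 := pred0)) ?count_pred0.
  by rewrite addn0; apply: eq_count => i; exact: softg.
exists s2; split.
  rewrite /auxok all_cat; apply/andP; split.
    rewrite all_map; apply/allP => i ii /=; rewrite /g; case: ifP => _ //=.
    rewrite satW ?nthW //; exact: (all_nthP tc_dflt Hs _ (nthW _ ii)).
  rewrite all_map; apply/allP => c cE /=.
  have -> : clause_sat s2 c = clause_sat s' c.
    apply: sat_agree => l lc; rewrite /s2.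
    case: (HE c cE l lc) => [lBV | /negbTE -> //].
    by rewrite (negbTE (Hfresh _ lBV)).
  exact: (allP s'E).
rewrite count_cat count_map.
have -> : count (fals s2) [seq TClause c true | c <- E] = 0.
  by rewrite count_map; apply/eqP; rewrite -leqn0; rewrite (eq_count (a2 := pred0)) ?count_pred0.
rewrite addn0 -count_map.
set f' := count _ _ in fals_lt *.
set f := count (fals s) W in Hn fals_lt.
apply: leq_trans Hn.
rewrite -addnA leq_add2l.
apply: leq_trans (_ : m + m * f' <= m * f); first by rewrite leq_add2r.
by rewrite -mulnS leq_mul2l fals_lt orbT.
Qed.

Theorem proposition5 :
  exists C : nat, forall (phi : cnf) (W : seq tclause) (n : nat),
    msu1_reachable phi W n -> n <= C * (size phi) ^ 2.
Proof.
exists 1 => phi W n H; rewrite mul1n -mulnn.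
suff : count (fun tc => ~~ tc_aux tc) W = size phi /\
  (exists s, auxok s W /\ n + size phi * count (fals s) W <= size phi * size phi).
  by move=> [_ [s [_ h]]]; apply: leq_trans h; apply: leq_addr.
elim: H => [|W0 n0 W' n' _ IH st].
  split; first by rewrite /msu1_init count_map count_predT.
  exists (fun _ => true); split.
    by rewrite /auxok all_map; apply/allP.
  rewrite add0n leq_mul2l; apply/orP; right.
  by rewrite -(size_map (fun c => TClause c false) phi) count_size.
case: IH => h1 h2; exact: step_inv st h1 h2.
Qed.
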